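(* Let $M$ be a connected topological manifold, $\Gamma$ a simple graph, and $H$ a complete subgraph of $\Gamma$. Then the map $\pi_\Gamma^H:\mathrm{Conf}_{\Gamma}(M)\to\mathrm{Conf}_{H}(M)$ is a (locally trivial) bundle projection.
   Context: For a graph $G$, $\mathrm{Conf}_{G}(M)=\{(x_v)_{v\in V(G)}\in M^{V(G)}: x_u\neq x_v\text{ whenever }\{u,v\}\in E(G)\}$. A complete subgraph $H$ of $\Gamma$ is a subgraph in which any two vertices are adjacent. The map $\pi_\Gamma^H$ sends $(x_v)_{v\in V(\Gamma)}$ to $(x_v)_{v\in V(H)}$ (forgetting the coordinates indexed by vertices not in $H$). *)

(* Defs.v *)
From HB Require Import structures.
From mathcomp Require Import all_boot all_order all_algebra.
From mathcomp Require Import all_classical all_reals all_analysis.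
From mathcomp Require Import Rstruct Rstruct_topology.

Set Implicit Arguments. Unset Strict Implicit. Unset Printing Implicit Defensive.
Import Order.TTheory GRing.Theory Num.Theory.
Local Open Scope classical_set_scope.

Definition homeo_on {X Y : topologicalType} (A : set X) (B : set Y)
  (f : X -> Y) (g : Y -> X) : Prop :=
  [/\ {within A, continuous f}, {within B, continuous g},
      (forall x, A x -> B (f x) /\ g (f x) = x) &
      (forall y, B y -> A (g y) /\ f (g y) = y)].

Definition topological_manifold (M : topologicalType) : Prop :=
  [/\ hausdorff_space M, @second_countable M &
      exists n : nat, forall x : M, exists U : set M,
        [/\ open U, U x &
          exists (V : set 'rV[Rdefinitions.R]_n) (f : M -> 'rV[Rdefinitions.R]_n) g,
            open V /\ homeo_on U V f g]].

Definition simple_graph (V : finType) (e : rel V) : Prop :=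
  (forall u v, e u v = e v u) /\ (forall v, ~~ e v v).

Definition subgraph (W V : finType) (eH : rel W) (e : rel V) (i : W -> V) : Prop :=
  injective i /\ (forall w w', eH w w' -> e (i w) (i w')).

Definition complete_graph (W : finType) (eH : rel W) : Prop :=
  forall w w', w != w' -> eH w w'.

Definition Conf (V : finType) (e : rel V) (M : topologicalType) : set {ptws V -> M} :=
  [set x | forall u v, e u v -> x u <> x v].

Definition forget (W V : finType) (i : W -> V) (M : topologicalType)
  (x : {ptws V -> M}) : {ptws W -> M} := fun w => x (i w).

Definition locally_trivial_bundle {E B : topologicalType} (Es : set E) (Bs : set B)
  (p : E -> B) : Prop :=
  [/\ (forall x, Es x -> Bs (p x)), {within Es, continuous p} &
    forall b, Bs b -> exists U : set B,
      [/\ open U, U b &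
        exists (F : topologicalType) (Fs : set F)
               (phi : E -> B * F) (psi : B * F -> E),
          homeo_on (Es `&` p @^-1` U) ((Bs `&` U) `*` Fs) phi psi /\
          (forall x, (Es `&` p @^-1` U) x -> (phi x).1 = p x)]].

Arguments Conf [V] e M _.
Arguments forget [W V] i M x _.

(* Main.v *)
Require Import Defs.
From HB Require Import structures.
From mathcomp Require Import all_boot all_order all_algebra.
From mathcomp Require Import all_classical all_reals all_analysis.
From mathcomp Require Import Rstruct Rstruct_topology.
From mathcomp Require Import ring lra.
Set Implicit Arguments. Unset Strict Implicit. Unset Printing Implicit Defensive.
Import Order.TTheory GRing.Theory Num.Theory.
Import numFieldNormedType.Exports.
Local Open Scope classical_set_scope.

Section ptws.
Context {I : eqType} {T : topologicalType}.

Lemma ptws_cvgP (F : set_system {ptws I -> T}) (f : {ptws I -> T}) :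
  Filter F -> (forall i, (fun g : {ptws I -> T} => g i) @ F --> f i) -> F --> f.
Proof.
move=> FF H.
apply/cvg_sup => i.
have surj : [set (g : {ptws I -> T}) i | g in [set: {ptws I -> T}]] = [set: T].
  rewrite eqEsubset; split => y // _; exists (dfwith f i y) => //.
apply/(@cvg_image _ _ (fun g : {ptws I -> T} => g i)) => //.
move=> B /H /= FB; exists ((fun g : {ptws I -> T} => g i) @^-1` B) => //.
by rewrite image_preimage.
Qed.
End ptws.

Local Open Scope ring_scope.

Section tent.
Variable R : realFieldType.
Implicit Types lo a b hi x t : R.

Definition tent lo a hi x : R :=
  Num.max 0 (Num.min ((x - lo) / (a - lo)) ((hi - x) / (hi - a))).
Definition lam lo hi a b x : R := x + (b - a) * tent lo a hi x.

Lemma tent_ge0 lo a hi x : 0 <= tent lo a hi x.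
Proof. by rewrite /tent le_max lexx. Qed.

Lemma tent_le1 lo a hi x : lo < a < hi -> tent lo a hi x <= 1.
Proof.
move=> /andP[la ah]; rewrite /tent ge_max ler01 /=.
have [xa|ax] := lerP x a.
  rewrite ge_min; apply/orP; left.
  by rewrite ler_pdivrMr ?subr_gt0 // mul1r lerD2r.
rewrite ge_min; apply/orP; right.
by rewrite ler_pdivrMr ?subr_gt0 // mul1r lerD2l lerN2 ltW.
Qed.

Lemma tent_outL lo a hi x : lo < a < hi -> x <= lo -> tent lo a hi x = 0.
Proof.
move=> /andP[la ah] xl; rewrite /tent; apply/max_idPl.
rewrite ge_min; apply/orP; left.
by rewrite ler_pdivrMr ?subr_gt0 // mul0r subr_le0.
Qed.

Lemma tent_outR lo a hi x : lo < a < hi -> hi <= x -> tent lo a hi x = 0.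
Proof.
move=> /andP[la ah] xl; rewrite /tent; apply/max_idPl.
rewrite ge_min; apply/orP; right.
by rewrite ler_pdivrMr ?subr_gt0 // mul0r subr_le0.
Qed.

Lemma tentL lo a hi t : lo < a < hi -> 0 <= t <= 1 ->
  tent lo a hi (lo + t * (a - lo)) = t.
Proof.
move=> /andP[la ah] /andP[t0 t1].
have al : a - lo != 0 by rewrite subr_eq0 gt_eqF.
have e1 : (lo + t * (a - lo) - lo) / (a - lo) = t.
  by rewrite addrAC subrr add0r mulfK.
rewrite /tent e1 (min_idPl _) ?(max_idPr _) //.
rewrite ler_pdivlMr ?subr_gt0 //.
have : 0 <= (1 - t) * (a - lo) by apply: mulr_ge0; rewrite ?subr_ge0 // ltW.
have : t * (hi - a) <= hi - a by rewrite ler_piMl // subr_ge0 ltW.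
lra.
Qed.

Lemma tentR lo a hi t : lo < a < hi -> 0 <= t <= 1 ->
  tent lo a hi (hi - t * (hi - a)) = t.
Proof.
move=> /andP[la ah] /andP[t0 t1].
have al : hi - a != 0 by rewrite subr_eq0 gt_eqF.
have e1 : (hi - (hi - t * (hi - a))) / (hi - a) = t.
  by rewrite opprB addrCA subrr addr0 mulfK.
rewrite /tent e1 (min_idPr _) ?(max_idPr _) //.
rewrite ler_pdivlMr ?subr_gt0 //.
have : 0 <= (1 - t) * (hi - a) by apply: mulr_ge0; rewrite ?subr_ge0 // ltW.
have : t * (a - lo) <= a - lo by rewrite ler_piMl // subr_ge0 ltW.
lra.
Qed.

Lemma tent_mid lo a hi : lo < a < hi -> tent lo a hi a = 1.
Proof.
move=> h; have := @tentL lo a hi 1 h; rewrite mul1r addrCA subrr addr0; apply.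
by rewrite ler01 lexx.
Qed.

Lemma lam_out lo hi a b x : lo < a < hi -> (x <= lo \/ hi <= x) -> lam lo hi a b x = x.
Proof.
move=> h [xl|xh]; rewrite /lam.
  by rewrite tent_outL // mulr0 addr0.
by rewrite tent_outR // mulr0 addr0.
Qed.

Lemma lam_eq lo hi a x : lam lo hi a a x = x.
Proof. by rewrite /lam subrr mul0r addr0. Qed.

Lemma lam_mid lo hi a b : lo < a < hi -> lam lo hi a b a = b.
Proof. by move=> h; rewrite /lam tent_mid // mulr1 addrC subrK. Qed.

Lemma lam_inv lo hi a b x : lo < a < hi -> lo < b < hi ->
  lam lo hi b a (lam lo hi a b x) = x.
Proof.
move=> ha hb.
have [xl|lx] := lerP x lo; first by rewrite !lam_out //; left.
have [hx|xh] := lerP hi x; first by rewrite !lam_out //; right.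
move: (ha) (hb) => /andP[la ah] /andP[lb bh].
have [xa|ax] := lerP x a.
  pose t := (x - lo) / (a - lo).
  have al : a - lo != 0 by rewrite subr_eq0 gt_eqF.
  have ex : x = lo + t * (a - lo) by rewrite /t mulfVK // addrC subrK.
  have t01 : 0 <= t <= 1.
    rewrite /t divr_ge0 ?subr_ge0 ?(ltW lx) ?(ltW la) //=.
    by rewrite ler_pdivrMr ?subr_gt0 // mul1r lerD2r.
  rewrite ex /lam tentL //.
  have ey : lo + t * (a - lo) + (b - a) * t = lo + t * (b - lo) by ring.
  by rewrite ey tentL //; ring.
pose t := (hi - x) / (hi - a).
have al : hi - a != 0 by rewrite subr_eq0 gt_eqF.
have ex : x = hi - t * (hi - a) by rewrite /t mulfVK // opprB addrC subrK.
have t01 : 0 <= t <= 1.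
  rewrite /t divr_ge0 ?subr_ge0 ?(ltW xh) ?(ltW ah) //=.
  by rewrite ler_pdivrMr ?subr_gt0 // mul1r lerD2l lerN2 ltW.
rewrite ex /lam tentR //.
have ey : hi - t * (hi - a) + (b - a) * t = hi - t * (hi - b) by ring.
by rewrite ey tentR //; ring.
Qed.

End tent.

Section cont.
Variables (R : realType) (X : topologicalType).

Lemma cont_cst (c : R) (x0 : X) : {for x0, continuous (fun _ : X => c)}.
Proof. exact: cvg_cst. Qed.

Lemma cont_add (f g : X -> R) x0 : {for x0, continuous f} -> {for x0, continuous g} ->
  {for x0, continuous (fun y => f y + g y)}.
Proof. by move=> cf cg; apply: cvgD. Qed.

Lemma cont_sub (f g : X -> R) x0 : {for x0, continuous f} -> {for x0, continuous g} ->
  {for x0, continuous (fun y => f y - g y)}.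
Proof. by move=> cf cg; apply: cvgB. Qed.

Lemma cont_mul (f g : X -> R) x0 : {for x0, continuous f} -> {for x0, continuous g} ->
  {for x0, continuous (fun y => f y * g y)}.
Proof. by move=> cf cg; apply: cvgM. Qed.

Lemma cont_div (f g : X -> R) x0 : g x0 != 0 -> {for x0, continuous f} -> {for x0, continuous g} ->
  {for x0, continuous (fun y => f y / g y)}.
Proof. by move=> g0 cf cg; apply: cvgM => //; apply: cvgV. Qed.

Lemma cont_min (f g : X -> R) x0 : {for x0, continuous f} -> {for x0, continuous g} ->
  {for x0, continuous (fun y => Num.min (f y) (g y))}.
Proof. by move=> cf cg; apply: (continuous_min cf cg). Qed.

Lemma cont_max (f g : X -> R) x0 : {for x0, continuous f} -> {for x0, continuous g} ->
  {for x0, continuous (fun y => Num.max (f y) (g y))}.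
Proof. by move=> cf cg; apply: (continuous_max cf cg). Qed.

Lemma cont_tent (lo hi : R) (fa fx : X -> R) x0 : lo < fa x0 < hi ->
  {for x0, continuous fa} -> {for x0, continuous fx} ->
  {for x0, continuous (fun y => tent lo (fa y) hi (fx y))}.
Proof.
move=> /andP[la ah] ca cx; rewrite /tent.
apply: cont_max; first exact: cont_cst.
apply: cont_min; apply: cont_div.
- by rewrite subr_eq0 gt_eqF.
- by apply: cont_sub => //; exact: cont_cst.
- by apply: cont_sub => //; exact: cont_cst.
- by rewrite subr_eq0 gt_eqF.
- by apply: cont_sub => //; exact: cont_cst.
- by apply: cont_sub => //; exact: cont_cst.
Qed.

Lemma cont_lam (lo hi : R) (fa fb fx : X -> R) x0 : lo < fa x0 < hi ->
  {for x0, continuous fa} -> {for x0, continuous fb} -> {for x0, continuous fx} ->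
  {for x0, continuous (fun y => lam lo hi (fa y) (fb y) (fx y))}.
Proof.
move=> h ca cb cx; rewrite /lam.
apply: cont_add => //; apply: cont_mul; first exact: cont_sub.
exact: cont_tent.
Qed.

End cont.

Lemma mx_cvgP {T : topologicalType} m n (F : set_system 'M[T]_(m,n)) (f : 'M[T]_(m,n)) :
  Filter F -> (forall i j, (fun M : 'M[T]_(m,n) => M i j) @ F --> f i j) -> F --> f.
Proof.
move=> FF H A [P Pn sPA]; apply: (filterS sPA).
apply: filter_forall => i; apply: filter_forall => j.
exact: (H i j _ (Pn i j)).
Qed.

Lemma cont_ext {X Y : topologicalType} (f g : X -> Y) x0 :
  f =1 g -> {for x0, continuous f} -> {for x0, continuous g}.
Proof. by move=> e; have -> : g = f by apply/funext => y; rewrite e. Qed.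

Section bigmin.
Variable (R : realType).

Lemma bigmin_le (I : eqType) (r : seq I) (P : pred I) (F : I -> R) j0 :
  j0 \in r -> P j0 -> \big[Num.min/1]_(j <- r | P j) F j <= F j0.
Proof.
elim: r => // a r IH; rewrite in_cons big_cons => /orP[/eqP <-|jr] Pj.
  by rewrite Pj ge_min lexx.
case: (P a); last exact: IH.
by rewrite ge_min IH ?orbT.
Qed.

Lemma bigmin_01 (I : eqType) (r : seq I) (P : pred I) (F : I -> R) :
  (forall j, 0 <= F j <= 1) -> 0 <= \big[Num.min/1]_(j <- r | P j) F j <= 1.
Proof.
move=> H; apply: (big_ind (fun v => 0 <= v <= 1)) => //; first by rewrite ler01 lexx.
move=> x y /andP[x0 x1] /andP[y0 y1].
by rewrite le_min x0 y0 ge_min x1.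
Qed.

Lemma bigmin_1 (I : eqType) (r : seq I) (P : pred I) (F : I -> R) :
  (forall j, P j -> F j = 1) -> \big[Num.min/1]_(j <- r | P j) F j = 1.
Proof.
move=> H; apply: (big_ind (fun v => v = 1)) => //; first by move=> x y -> ->; rewrite minxx.
Qed.

Lemma cont_bigmin (X : topologicalType) (I : eqType) (r : seq I) (P : pred I)
  (F : I -> X -> R) x0 :
  (forall j, P j -> {for x0, continuous (F j)}) ->
  {for x0, continuous (fun y => \big[Num.min/1]_(j <- r | P j) F j y)}.
Proof.
move=> H; elim: r => [|a r IH].
  by apply: (@cont_ext X R (fun _ => 1)) => [y|]; rewrite ?big_nil //; exact: cont_cst.
case Pa: (P a).
  apply: (cont_ext (f := fun y => Num.min (F a y) (\big[Num.min/1]_(j <- r | P j) F j y))).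
    by move=> y; rewrite big_cons Pa.
  by apply: cont_min => //; apply: H.
by apply: (cont_ext _ IH) => y; rewrite big_cons Pa.
Qed.
End bigmin.

Lemma cont_fst {X Y : topologicalType} (x : X * Y) : {for x, continuous (@fst X Y)}.
Proof. by case: x => a b; exact: (@cvg_fst _ _ (nbhs a) (nbhs b) (nbhs_filter b)). Qed.

Lemma cont_snd {X Y : topologicalType} (x : X * Y) : {for x, continuous (@snd X Y)}.
Proof. by case: x => a b; exact: (@cvg_snd _ _ (nbhs a) (nbhs b) (nbhs_filter a)). Qed.

Lemma cont_pair {X Y Z : topologicalType} (f : X -> Y) (g : X -> Z) x :
  {for x, continuous f} -> {for x, continuous g} ->
  {for x, continuous (fun y => (f y, g y))}.
Proof. by move=> cf cg; apply: cvg_pair. Qed.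

Lemma cont_compo {X Y Z : topologicalType} (f : X -> Y) (g : Y -> Z) x :
  {for x, continuous f} -> {for f x, continuous g} ->
  {for x, continuous (fun y => g (f y))}.
Proof. exact: continuous_comp. Qed.

Lemma cont_coord {R : realType} {X : topologicalType} n (f : X -> 'rV[R]_n) j x :
  {for x, continuous f} -> {for x, continuous (fun y => f y ord0 j)}.
Proof. move=> cf; apply: (@cont_compo _ _ _ f (fun M : 'rV[R]_n => M ord0 j) x cf); exact: coord_continuous. Qed.

Section Rn.
Variables (R : realType) (n : nat) (p : 'rV[R]_n) (rho : R).
Hypothesis rho0 : 0 < rho.

Let lo j := p ord0 j - rho.
Let hi j := p ord0 j + rho.
Definition inbox (q : 'rV[R]_n) := forall j, `|q ord0 j - p ord0 j| < rho.
Definition mid (D : seq 'I_n) (q : 'rV[R]_n) j := if j \in D then q ord0 j else p ord0 j.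
Definition Tm D k q (z : 'rV[R]_n) :=
  \big[Num.min/1]_(j <- enum 'I_n | j != k) tent (lo j) (mid D q j) (hi j) (z ord0 j).
Definition bk D k q z := p ord0 k + Tm D k q z * (q ord0 k - p ord0 k).
Definition stS D k q z : 'rV[R]_n :=
  \row_j (if j == k then lam (lo k) (hi k) (p ord0 k) (bk D k q z) (z ord0 k) else z ord0 j).
Definition stS' D k q z : 'rV[R]_n :=
  \row_j (if j == k then lam (lo k) (hi k) (bk D k q z) (p ord0 k) (z ord0 k) else z ord0 j).

Lemma aux_lt (c r : R) : 0 < r -> c - r < c < c + r.
Proof. move=> h; apply/andP; split; lra. Qed.

Lemma box_in (x c : R) : `|x - c| < rho -> c - rho < x < c + rho.
Proof. rewrite ltr_norml => /andP[a b]; apply/andP; split; clear lo hi; lra. Qed.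

Lemma mid_in D q j : inbox q -> lo j < mid D q j < hi j.
Proof.
move=> qb; rewrite /mid /lo /hi; case: (j \in D); first exact: box_in.
exact: aux_lt.
Qed.

Lemma Tm01 D k q z : inbox q -> 0 <= Tm D k q z <= 1.
Proof.
move=> qb; apply: bigmin_01 => j; rewrite tent_ge0 tent_le1 //; exact: mid_in.
Qed.

Lemma p_in k : lo k < p ord0 k < hi k.
Proof. exact: aux_lt. Qed.

Lemma bk_in D k q z : inbox q -> lo k < bk D k q z < hi k.
Proof.
move=> qb; have /andP[t0 t1] := Tm01 D k z qb.
have := qb k; rewrite ltr_norml /bk /lo /hi => /andP[a b].
set T := Tm D k q z in t0 t1 *; set d := q ord0 k - p ord0 k in a b *.
have [d0|d0] := lerP 0 d.
  have : T * d <= d by rewrite ler_piMl.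
  have : 0 <= T * d by rewrite mulr_ge0.
  move=> h1 h2; apply/andP; split; lra.
have : d <= T * d by rewrite ler_niMl // ltW.
have : T * d <= 0 by rewrite mulr_ge0_le0 // ltW.
move=> h1 h2; apply/andP; split; lra.
Qed.

Lemma Tm_stS D k q z : Tm D k q (stS D k q z) = Tm D k q z.
Proof.
by apply: eq_big => // j /negbTE jk; rewrite mxE jk.
Qed.

Lemma Tm_stS' D k q z : Tm D k q (stS' D k q z) = Tm D k q z.
Proof.
by apply: eq_big => // j /negbTE jk; rewrite mxE jk.
Qed.

Lemma stSK D k q z : inbox q -> stS' D k q (stS D k q z) = z.
Proof.
move=> qb; apply/rowP => j; rewrite /stS' mxE.
have [-> | jk] := eqVneq j k; last by rewrite mxE (negbTE jk).
by rewrite {1}/bk Tm_stS mxE eqxx -/(bk D k q z) lam_inv ?p_in ?bk_in.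
Qed.

Lemma stS'K D k q z : inbox q -> stS D k q (stS' D k q z) = z.
Proof.
move=> qb; apply/rowP => j; rewrite /stS mxE.
have [-> | jk] := eqVneq j k; last by rewrite mxE (negbTE jk).
by rewrite {1}/bk Tm_stS' mxE eqxx -/(bk D k q z) lam_inv ?p_in ?bk_in.
Qed.

Definition outbox (z : 'rV[R]_n) := exists j, rho <= `|z ord0 j - p ord0 j|.

Lemma out_lohi (x c : R) : rho <= `|x - c| -> x <= c - rho \/ c + rho <= x.
Proof.
rewrite ler_normr => /orP[h|h]; [right|left]; lra.
Qed.

Lemma stS_out D k q z : inbox q -> outbox z -> stS D k q z = z /\ stS' D k q z = z.
Proof.
move=> qb [j zj].
have Tk : j != k -> Tm D k q z = 0.
  move=> jk; apply/eqP; rewrite eq_le; apply/andP; split; last by case/andP: (Tm01 D k z qb).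
  have := @bigmin_le R _ (enum 'I_n) (fun j => j != k)
    (fun j => tent (lo j) (mid D q j) (hi j) (z ord0 j)) j.
  rewrite mem_enum => /(_ isT jk) h; apply: le_trans h _.
  by case: (out_lohi zj) => h;
    [rewrite tent_outL ?mid_in | rewrite tent_outR ?mid_in].
split; apply/rowP => i; rewrite mxE; have [-> | ik] := eqVneq i k => //.
- have [<-|jk] := eqVneq j k; last by rewrite /bk Tk // mul0r addr0 lam_eq.
  by rewrite lam_out ?p_in //; exact: out_lohi.
- have [<-|jk] := eqVneq j k; last by rewrite /bk Tk // mul0r addr0 lam_eq.
  by rewrite lam_out ?bk_in //; exact: out_lohi.
Qed.


Definition midrow D q : 'rV[R]_n := \row_j mid D q j.

Lemma stS_mid D k q : inbox q -> k \notin D -> stS D k q (midrow D q) = midrow (k :: D) q.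
Proof.
move=> qb kD.
have T1 : Tm D k q (midrow D q) = 1.
  by apply: bigmin_1 => j _; rewrite mxE tent_mid ?mid_in.
apply/rowP => j; rewrite !mxE.
have [->|jk] := eqVneq j k.
  rewrite /bk T1 mul1r addrC subrK ?mxE /mid (negbTE kD) lam_mid ?p_in //.
  by rewrite in_cons eqxx.
by rewrite ?mxE /mid in_cons (negbTE jk).
Qed.

Lemma midrow0 q : midrow [::] q = p.
Proof. by apply/rowP => j; rewrite mxE. Qed.

Lemma midrowT q : midrow (enum 'I_n) q = q.
Proof. by apply/rowP => j; rewrite !mxE /mid mem_enum ord1. Qed.

Fixpoint comp (s : seq 'I_n) q z := if s is k :: s' then stS s' k q (comp s' q z) else z.
Fixpoint icomp (s : seq 'I_n) q z := if s is k :: s' then icomp s' q (stS' s' k q z) else z.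

Lemma compK s q z : inbox q -> icomp s q (comp s q z) = z.
Proof. by move=> qb; elim: s z => //= k s IH z; rewrite stSK. Qed.

Lemma icompK s q z : inbox q -> comp s q (icomp s q z) = z.
Proof. by move=> qb; elim: s z => //= k s IH z; rewrite IH stS'K. Qed.

Lemma comp_mid s q : inbox q -> uniq s -> comp s q p = midrow s q.
Proof.
move=> qb; elim: s => [_|k s IH /= /andP[ks us]]; first by rewrite midrow0.
by rewrite IH // stS_mid.
Qed.

Lemma comp_out s q z : inbox q -> outbox z -> comp s q z = z /\ icomp s q z = z.
Proof.
move=> qb zo; elim: s => //= k s [IH1 IH2].
have [h1 h2] := stS_out s k qb zo; by rewrite IH1 h1 h2 IH2.
Qed.

Local Notation RR := ('rV[R]_n * 'rV[R]_n)%type.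

Lemma cont_Tm D k q0 z0 : inbox q0 ->
  {for (q0, z0), continuous (fun x : RR => Tm D k x.1 x.2)}.
Proof.
move=> qb; apply: cont_bigmin => j _.
have := mid_in D j qb; rewrite /mid; case: (j \in D) => hm.
  apply: cont_tent => //; apply: cont_coord; [exact: cont_fst | exact: cont_snd].
apply: cont_tent => //; [exact: cont_cst | apply: cont_coord; exact: cont_snd].
Qed.

Lemma cont_bk D k q0 z0 : inbox q0 ->
  {for (q0, z0), continuous (fun x : RR => bk D k x.1 x.2)}.
Proof.
move=> qb; rewrite /bk; apply: cont_add; first exact: cont_cst.
apply: cont_mul; first exact: cont_Tm.
apply: cont_sub; last exact: cont_cst.
apply: cont_coord; exact: cont_fst.
Qed.

Lemma cont_stS D k q0 z0 : inbox q0 ->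
  {for (q0, z0), continuous (fun x : RR => stS D k x.1 x.2)}.
Proof.
move=> qb; apply: mx_cvgP => i j.
have H : {for (q0, z0), continuous (fun x : RR => (stS D k x.1 x.2) i j)}.
  apply: (cont_ext (f := fun x : RR => if j == k then
     lam (lo k) (hi k) (p ord0 k) (bk D k x.1 x.2) (x.2 ord0 k) else x.2 ord0 j)).
    by move=> x; rewrite mxE.
  case: (j == k).
    apply: cont_lam; [exact: p_in | exact: cont_cst | exact: cont_bk |].
    apply: cont_coord; exact: cont_snd.
  apply: cont_coord; exact: cont_snd.
exact: H.
Qed.

Lemma cont_stS' D k q0 z0 : inbox q0 ->
  {for (q0, z0), continuous (fun x : RR => stS' D k x.1 x.2)}.
Proof.
move=> qb; apply: mx_cvgP => i j.
have H : {for (q0, z0), continuous (fun x : RR => (stS' D k x.1 x.2) i j)}.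
  apply: (cont_ext (f := fun x : RR => if j == k then
     lam (lo k) (hi k) (bk D k x.1 x.2) (p ord0 k) (x.2 ord0 k) else x.2 ord0 j)).
    by move=> x; rewrite mxE.
  case: (j == k).
    apply: cont_lam; [exact: bk_in | exact: cont_bk | exact: cont_cst |].
    apply: cont_coord; exact: cont_snd.
  apply: cont_coord; exact: cont_snd.
exact: H.
Qed.

Lemma cont_comp s q0 z0 : inbox q0 ->
  {for (q0, z0), continuous (fun x : RR => comp s x.1 x.2)}.
Proof.
move=> qb; elim: s => [|k s IH] /=; first exact: cont_snd.
apply: (@cont_compo _ _ _ (fun x : RR => (x.1, comp s x.1 x.2))
   (fun y : RR => stS s k y.1 y.2)).
  by apply: cont_pair => //; exact: cont_fst.
exact: cont_stS.
Qed.

Lemma cont_icomp s q0 z0 : inbox q0 ->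
  {for (q0, z0), continuous (fun x : RR => icomp s x.1 x.2)}.
Proof.
move=> qb; elim: s z0 => [|k s IH] z0 /=; first exact: cont_snd.
apply: (@cont_compo _ _ _ (fun x : RR => (x.1, stS' s k x.1 x.2))
   (fun y : RR => icomp s y.1 y.2)).
  apply: cont_pair; [exact: cont_fst | exact: cont_stS'].
exact: IH.
Qed.

End Rn.

Section rnmover.
Variables (R : realType) (n : nat).

Lemma cont_norm_coord (p : 'rV[R]_n) j (q : 'rV[R]_n) :
  {for q, continuous (fun x : 'rV[R]_n => `|x ord0 j - p ord0 j|)}.
Proof.
have h : {for q, continuous (fun x : 'rV[R]_n => x ord0 j - p ord0 j)}.
  apply: cont_sub; last exact: cont_cst.
  apply: cont_coord; exact: cvg_id.
exact: (cvg_norm h).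
Qed.

Lemma open_box (p : 'rV[R]_n) rho : open (inbox p rho).
Proof.
rewrite openE => q Hq; rewrite /interior.
suff : \forall x \near q, forall j, `|(x : 'rV[R]_n) ord0 j - p ord0 j| < rho by [].
apply: (@filter_forall _ _ (fun j (x : 'rV[R]_n) => `|x ord0 j - p ord0 j| < rho) (nbhs q) (nbhs_filter q)) => j.
set f := fun x : 'rV[R]_n => `|x ord0 j - p ord0 j|.
have fq : f q < rho by exact: Hq.
have : nbhs (f q) (ball (f q) (rho - f q)) by apply: nbhsx_ballx; rewrite subr_gt0.
move=> /(@cont_norm_coord p j q) h.
have h2 : nbhs q [set x | ball (f q) (rho - f q) (f x)] := h.
apply: (filterS _ h2) => x /=.
rewrite -ball_normE /ball_ /= => hx.
have : f x - f q <= `|f q - f x| by rewrite distrC ler_norm.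
rewrite /f in hx fq *; lra.
Qed.

Lemma half_lt (e : R) : 0 < e -> e / 2 < e.
Proof. move=> h; lra. Qed.

Lemma rn_mover (p : 'rV[R]_n) (A : set 'rV[R]_n) : nbhs p A ->
 exists (N K : set 'rV[R]_n) (Phi Psi : 'rV[R]_n -> 'rV[R]_n -> 'rV[R]_n),
   open N /\ N p /\ compact K /\ K `<=` A /\
   (forall q, N q -> Phi q p = q) /\
   (forall q z, N q -> Psi q (Phi q z) = z /\ Phi q (Psi q z) = z) /\
   (forall q z, N q -> ~ K z -> Phi q z = z /\ Psi q z = z) /\
   (forall q z, N q ->
      {for (q, z), continuous (fun x : 'rV[R]_n * 'rV[R]_n => Phi x.1 x.2)} /\
      {for (q, z), continuous (fun x : 'rV[R]_n * 'rV[R]_n => Psi x.1 x.2)}).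
Proof.
move=> /nbhs_ballP [e e0 sA].
pose rho := e / 2.
have rho0 : 0 < rho by rewrite divr_gt0.
have rhoe : rho < e by exact: half_lt.
pose K := [set z : 'rV[R]_n | forall j, `|z ord0 j - p ord0 j| <= rho].
exists (inbox p rho), K, (comp p rho (enum 'I_n)), (icomp p rho (enum 'I_n)).
split; first exact: open_box.
split; first by move=> j; rewrite subrr normr0.
split.
  have -> : K = [set v : 'rV[R]_n | forall i,
      `[p ord0 i - rho, p ord0 i + rho]%classic (v ord0 i)].
    apply/seteqP; split => z /= h i; have := h i; rewrite /= in_itv /=.
      by rewrite ler_norml => /andP[a b]; apply/andP; split; lra.
    by move=> /andP[a b]; rewrite ler_norml; apply/andP; split; lra.
  apply: (@rV_compact _ n (fun i => `[p ord0 i - rho, p ord0 i + rho]%classic)) => i.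
  exact: segment_compact.
split.
  move=> z Kz; apply: sA; split => // i j; rewrite ord1.
  rewrite -ball_normE /ball_ /= distrC; exact: le_lt_trans (Kz j) rhoe.
split; first by move=> q qb; rewrite comp_mid ?enum_uniq // midrowT.
split; first by move=> q z qb; rewrite compK // icompK.
split.
  move=> q z qb nK.
  have zo : outbox p rho z.
    apply: contrapT => h; apply: nK => j; rewrite leNgt; apply/negP => hj.
    by apply: h; exists j; exact: ltW.
  exact: comp_out.
move=> q z qb; split; [exact: cont_comp | exact: cont_icomp].
Qed.

End rnmover.

Lemma cont_near {X Y : topologicalType} (f g : X -> Y) x0 :
  (\forall x \near x0, f x = g x) -> {for x0, continuous f} -> {for x0, continuous g}.
Proof.
move=> e cf; have e0 : f x0 = g x0 := nbhs_singleton e.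
move=> A; rewrite -e0 => /cf fA; rewrite nbhs_simpl /=.
have fA' : \forall x \near x0, A (f x) := fA.
near=> x => /=; rewrite -(near e x) //; exact: (near fA' x).
Unshelve. all: end_near.
Qed.

Lemma M_mover (M : topologicalType) : topological_manifold M ->
  forall (c : M) (O : set M), open O -> O c ->
  exists (N : set M) (h hi : M -> M -> M),
   open N /\ N c /\ N `<=` O /\
   (forall y, N y -> h y c = y) /\
   (forall y z, N y -> hi y (h y z) = z /\ h y (hi y z) = z) /\
   (forall y z, N y -> ~ O z -> h y z = z /\ hi y z = z) /\
   (forall y z, N y -> {for (y, z), continuous (fun x : M * M => h x.1 x.2)} /\
                       {for (y, z), continuous (fun x : M * M => hi x.1 x.2)}).
Proof.
move=> [hM _ [n charts]] c O oO Oc.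
have [U [oU Uc [V [f [g [oV [cf cg fg gf]]]]]]] := charts c.
have cf' : {in U, continuous f} by rewrite -continuous_open_subspace.
have cg' : {in V, continuous g} by rewrite -continuous_open_subspace.
have [Vfc gfc] := fg c Uc.
pose A := V `&` g @^-1` (U `&` O).
have nA : nbhs (f c) A.
  apply: filterI; first by apply: open_nbhs_nbhs; split.
  have : nbhs (g (f c)) (U `&` O).
    by rewrite gfc; apply: open_nbhs_nbhs; split; [exact: openI | split].
  by move/(cg' (f c)); rewrite inE; apply.
have [N0 [K [Phi [Psi [oN0 [N0p [cK [KA [Pp [Pinv [Pout Pcont]]]]]]]]]]] := rn_mover nA.
have KV : K `<=` V by move=> w /KA [].
have KPhi q w : N0 q -> K w -> K (Phi q w).
  move=> Nq Kw; apply: contrapT => nK.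
  have [e1 e2] := Pout q (Phi q w) Nq nK.
  have := (Pinv q w Nq).1; rewrite e2 => ew; apply: nK; by rewrite ew.
have KPsi q w : N0 q -> K w -> K (Psi q w).
  move=> Nq Kw; apply: contrapT => nK.
  have [e1 e2] := Pout q (Psi q w) Nq nK.
  have := (Pinv q w Nq).2; rewrite e1 => ew; apply: nK; by rewrite ew.
have PhiV q w : N0 q -> V w -> V (Phi q w).
  move=> Nq Vw; have [Kw|nKw] := pselect (K w); first exact/KV/KPhi.
  by rewrite (Pout q w Nq nKw).1.
have PsiV q w : N0 q -> V w -> V (Psi q w).
  move=> Nq Vw; have [Kw|nKw] := pselect (K w); first exact/KV/KPsi.
  by rewrite (Pout q w Nq nKw).2.
pose h y z := if pselect (U z) then g (Phi (f y) (f z)) else z.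
pose hi y z := if pselect (U z) then g (Psi (f y) (f z)) else z.
pose N := [set y | U y /\ O y /\ N0 (f y)].
have oN : open N.
  rewrite openE => y [Uy [Oy Ny]].
  have nU : nbhs y U by apply: open_nbhs_nbhs.
  have nO : nbhs y O by apply: open_nbhs_nbhs.
  have nN : nbhs y (f @^-1` N0).
    have : nbhs (f y) N0 by apply: open_nbhs_nbhs.
    by move/(cf' y); rewrite inE; apply.
  by apply: filterS (filterI nU (filterI nO nN)) => x [a [b d]].
exists N, h, hi.
split => //.
split; first by split; [|split].
split; first by move=> y [_ []].
split.
  move=> y [Uy [Oy Ny]]; rewrite /h; case: pselect => // ?.
  by rewrite Pp // (fg y Uy).2.
split.
  move=> y z [Uy [Oy Ny]]; rewrite /h /hi; split.
    case: (pselect (U z)) => Uz; last by case: pselect.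
    have [Vfz gfz] := fg z Uz.
    have [Ug fg'] := gf _ (PhiV _ _ Ny Vfz).
    case: pselect => // ?; by rewrite fg' (Pinv _ _ Ny).1 gfz.
  case: (pselect (U z)) => Uz; last by case: pselect.
  have [Vfz gfz] := fg z Uz.
  have [Ug fg'] := gf _ (PsiV _ _ Ny Vfz).
  case: pselect => // ?; by rewrite fg' (Pinv _ _ Ny).2 gfz.
split.
  move=> y z [Uy [Oy Ny]] nOz; rewrite /h /hi; case: pselect => // Uz.
  have [Vfz gfz] := fg z Uz.
  have nK : ~ K (f z) by move=> /KA [_ [_ Oz]]; apply: nOz; rewrite -gfz.
  by rewrite (Pout _ _ Ny nK).1 (Pout _ _ Ny nK).2 gfz.
move=> y z Ny'; move: (Ny') => [Uy [Oy Ny]].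
have cfy : {for y, continuous f} by apply: cf'; rewrite inE.
have [Uz|nUz] := pselect (U z).
  have cfz : {for z, continuous f} by apply: cf'; rewrite inE.
  have [Vfz gfz] := fg z Uz.
  have nU2 : \forall x \near (y, z), U x.2.
    have nU : nbhs z U by apply: open_nbhs_nbhs.
    exact: (@cont_snd M M (y, z) U nU).
  have cff : {for (y, z), continuous (fun x : M * M => (f x.1, f x.2))}.
    apply: cont_pair.
      by apply: (@cont_compo _ _ _ fst f); [exact: cont_fst | exact: cfy].
    by apply: (@cont_compo _ _ _ snd f); [exact: cont_snd | exact: cfz].
  split.
    have e : \forall x \near (y, z), g (Phi (f x.1) (f x.2)) = h x.1 x.2.
      by apply: filterS nU2 => x Ux; rewrite /h; case: pselect.
    apply: (cont_near e).
    apply: (@cont_compo _ _ _ (fun x : M * M => Phi (f x.1) (f x.2)) g).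
      apply: (@cont_compo _ _ _ (fun x : M * M => (f x.1, f x.2))
                 (fun u => Phi u.1 u.2)) => //.
      exact: (Pcont (f y) (f z) Ny).1.
    by apply: cg'; rewrite inE; apply: PhiV.
  have e : \forall x \near (y, z), g (Psi (f x.1) (f x.2)) = hi x.1 x.2.
    by apply: filterS nU2 => x Ux; rewrite /hi; case: pselect.
  apply: (cont_near e).
  apply: (@cont_compo _ _ _ (fun x : M * M => Psi (f x.1) (f x.2)) g).
    apply: (@cont_compo _ _ _ (fun x : M * M => (f x.1, f x.2))
               (fun u => Psi u.1 u.2)) => //.
    exact: (Pcont (f y) (f z) Ny).2.
  by apply: cg'; rewrite inE; apply: PsiV.
have cgK : compact (g @` K).
  apply: continuous_compact => //.
  exact: (continuous_subspaceW KV cg).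
have clK : closed (g @` K) by exact: compact_closed.
have ngK : ~ (g @` K) z.
  by move=> [k Kk gk]; apply: nUz; rewrite -gk; exact: (gf k (KV k Kk)).1.
have nn : \forall x \near (y, z), N x.1 /\ ~ (g @` K) x.2.
  apply: filterI.
    have nN : nbhs y N by apply: open_nbhs_nbhs.
    exact: (@cont_fst M M (y, z) N nN).
  have nC : nbhs z (~` (g @` K)) by apply: open_nbhs_nbhs; split => //; exact: closed_openC.
  exact: (@cont_snd M M (y, z) _ nC).
split.
  have e : \forall x \near (y, z), x.2 = h x.1 x.2.
    apply: filterS nn => x [[_ [_ Nx1]] ngx]; rewrite /h; case: pselect => // Ux2.
    have nK : ~ K (f x.2) by move=> Kx; apply: ngx; exists (f x.2) => //; exact: (fg _ Ux2).2.
    by rewrite (Pout _ _ Nx1 nK).1 (fg _ Ux2).2.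
  apply: (cont_near e); exact: cont_snd.
have e : \forall x \near (y, z), x.2 = hi x.1 x.2.
  apply: filterS nn => x [[_ [_ Nx1]] ngx]; rewrite /hi; case: pselect => // Ux2.
  have nK : ~ K (f x.2) by move=> Kx; apply: ngx; exists (f x.2) => //; exact: (fg _ Ux2).2.
  by rewrite (Pout _ _ Nx1 nK).2 (fg _ Ux2).2.
apply: (cont_near e); exact: cont_snd.
Qed.

Local Close Scope ring_scope.

Lemma sep_pair (M : topologicalType) : hausdorff_space M -> forall x y : M, x != y ->
  exists A B : set M, [/\ open A, open B, A x, B y & forall z, A z -> B z -> False].
Proof.
rewrite open_hausdorff => hM x y /hM [[A B] [xA yB] [/= oA oB /eqP AB0]].
exists A, B; split => //; first by move: xA; rewrite inE.
  by move: yB; rewrite inE.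
by move=> z Az Bz; have : (A `&` B) z by []; rewrite AB0.
Qed.

Lemma disj_family (M : topologicalType) (W : finType) (b : W -> M) :
  hausdorff_space M -> (forall w w', w != w' -> b w != b w') ->
  exists O : W -> set M, (forall w, open (O w)) /\ (forall w, O w (b w)) /\
    (forall w w' z, w != w' -> O w z -> O w' z -> False).
Proof.
move=> hM hb.
have : forall ww : W * W, exists AB : set M * set M, ww.1 != ww.2 ->
   [/\ open AB.1, open AB.2, AB.1 (b ww.1), AB.2 (b ww.2) &
       forall z, AB.1 z -> AB.2 z -> False].
  move=> [w w']; case: (eqVneq w w') => [_|ne]; first by exists (set0, set0).
  have [A [B [oA oB Aw Bw d]]] := sep_pair hM (hb _ _ ne).
  by exists (A, B).
move=> /choice [S HS].
exists (fun w => [set z | forall w', w' != w -> (S (w, w')).1 z /\ (S (w', w)).2 z]).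
split.
  move=> w; rewrite openE => z Oz.
  apply: (@filter_forall _ _ (fun w' z => w' != w -> (S (w, w')).1 z /\ (S (w', w)).2 z)
     (nbhs z) (nbhs_filter z)) => w'.
  case: (eqVneq w' w) => [->|ne]; first by apply: nearW.
  have ne' : w != w' by rewrite eq_sym.
  have [op1 _ _ _ _] := HS (w, w') ne'.
  have [_ op2 _ _ _] := HS (w', w) ne.
  have [Oz1 Oz2] := Oz w' ne.
  have n1 : nbhs z (S (w, w')).1 by apply: open_nbhs_nbhs.
  have n2 : nbhs z (S (w', w)).2 by apply: open_nbhs_nbhs.
  by apply: filterS (filterI n1 n2) => x [a c] _.
split.
  move=> w w' ne; have ne' : w != w' by rewrite eq_sym.
  have [_ _ h1 _ _] := HS (w, w') ne'.
  by have [_ _ _ h2 _] := HS (w', w) ne.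
move=> w w' z ne Oz O'z; have [_ _ _ _ d] := HS (w, w') ne.
have ne' : w' != w by rewrite eq_sym.
apply: (d z); first exact: (Oz w' ne').1.
exact: (O'z w ne).2.
Qed.

Section composition.
Variables (M : topologicalType) (W : finType) (O Nw : W -> set M)
  (hw hiw : W -> M -> M -> M).
Hypothesis NO : forall w, Nw w `<=` O w.
Hypothesis disj : forall w w' z, w != w' -> O w z -> O w' z -> False.
Hypothesis hinv : forall w y z, Nw w y -> hiw w y (hw w y z) = z /\ hw w y (hiw w y z) = z.
Hypothesis hout : forall w y z, Nw w y -> ~ O w z -> hw w y z = z /\ hiw w y z = z.
Hypothesis hcont : forall w y z, Nw w y ->
  {for (y, z), continuous (fun x : M * M => hw w x.1 x.2)} /\
  {for (y, z), continuous (fun x : M * M => hiw w x.1 x.2)}.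

Definition inU (y : {ptws W -> M}) := forall w, Nw w (y w).

Fixpoint Hs (s : seq W) (y : {ptws W -> M}) (z : M) : M :=
  if s is w :: s' then hw w (y w) (Hs s' y z) else z.
Fixpoint His (s : seq W) (y : {ptws W -> M}) (z : M) : M :=
  if s is w :: s' then His s' y (hiw w (y w) z) else z.

Lemma HsK s y z : inU y -> His s y (Hs s y z) = z.
Proof. by move=> yU; elim: s z => //= w s IH z; rewrite (hinv _ (yU w)).1. Qed.

Lemma HisK s y z : inU y -> Hs s y (His s y z) = z.
Proof. by move=> yU; elim: s z => //= w s IH z; rewrite IH (hinv _ (yU w)).2. Qed.

Lemma Hs_inj s y a c : inU y -> Hs s y a = Hs s y c -> a = c.
Proof. by move=> yU e; rewrite -(HsK s a yU) e HsK. Qed.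

Lemma His_inj s y a c : inU y -> His s y a = His s y c -> a = c.
Proof. by move=> yU e; rewrite -(HisK s a yU) e HisK. Qed.

Lemma cont_proj (w : W) (y : {ptws W -> M}) : {for y, continuous (fun g : {ptws W -> M} => g w)}.
Proof. exact: proj_continuous. Qed.

Lemma cont_Hs s y z : inU y ->
  {for (y, z), continuous (fun x : {ptws W -> M} * M => Hs s x.1 x.2)}.
Proof.
move=> yU; elim: s => [|w s IH] /=; first exact: cont_snd.
apply: (@cont_compo _ _ _ (fun x : {ptws W -> M} * M => (x.1 w, Hs s x.1 x.2))
   (fun u : M * M => hw w u.1 u.2)).
  apply: cont_pair => //.
  by apply: (@cont_compo _ _ _ fst (fun g : {ptws W -> M} => g w)); [exact: cont_fst|exact: cont_proj].
exact: (hcont _ (yU w)).1.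
Qed.

Lemma cont_His s y z : inU y ->
  {for (y, z), continuous (fun x : {ptws W -> M} * M => His s x.1 x.2)}.
Proof.
move=> yU; elim: s z => [|w s IH] z /=; first exact: cont_snd.
apply: (@cont_compo _ _ _ (fun x : {ptws W -> M} * M => (x.1, hiw w (x.1 w) x.2))
   (fun u : {ptws W -> M} * M => His s u.1 u.2)); last exact: IH.
apply: cont_pair; first exact: cont_fst.
apply: (@cont_compo _ _ _ (fun x : {ptws W -> M} * M => (x.1 w, x.2))
   (fun u : M * M => hiw w u.1 u.2)); last exact: (hcont _ (yU w)).2.
apply: cont_pair; last exact: cont_snd.
by apply: (@cont_compo _ _ _ fst (fun g : {ptws W -> M} => g w)); [exact: cont_fst|exact: cont_proj].
Qed.

Lemma Hs_b (b : W -> M) (hb : forall w, O w (b w))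
  (hc : forall w y, Nw w y -> hw w y (b w) = y) s y w :
  inU y -> uniq s -> Hs s y (b w) = if w \in s then y w else b w.
Proof.
move=> yU; elim: s => // w0 s IH /= /andP[w0s us]; rewrite in_cons IH //.
have [->|ne] := eqVneq w w0.
  by rewrite (negbTE w0s) /= hc.
have Ov : O w (if w \in s then y w else b w) by case: (w \in s); [exact: NO|].
rewrite /= (hout (yU w0) _).1 //.
by move=> O0; apply: (disj ne Ov O0).
Qed.

End composition.

Lemma ptws_cont {X : topologicalType} {I : eqType} {T : topologicalType}
  (G : X -> {ptws I -> T}) x :
  (forall j, {for x, continuous (fun y => G y j)}) -> {for x, continuous G}.
Proof. by move=> H; apply: ptws_cvgP. Qed.

Theorem corollary11p4 (M : topologicalType) (V : finType) (e : rel V)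
  (W : finType) (eH : rel W) (i : W -> V) :
  topological_manifold M -> connected [set: M] ->
  simple_graph e -> simple_graph eH -> subgraph eH e i -> complete_graph eH ->
  locally_trivial_bundle (Conf e M) (Conf eH M) (forget i M).
Proof.
move=> hMf _ _ _ [inj_i sub] compl.
have hM : hausdorff_space M by case: hMf.
set p := forget i M.
have cont_p : continuous p.
  move=> x; apply: ptws_cont => w.
  exact: (@proj_continuous V (fun _ => M) (i w) x).
have pE : forall x w, p x w = x (i w) by [].
split.
- by move=> x Ex u v /sub euv; exact: Ex.
- exact: continuous_subspaceT.
move=> b Bb.
have hb : forall w w', w != w' -> b w != b w'.
  by move=> w w' ne; apply/eqP; apply: Bb; apply: compl.
have [Ow [opO [Ob dO]]] := disj_family hM hb.
have mv : forall w, exists t : set M * (M -> M -> M) * (M -> M -> M),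
   [/\ open t.1.1 /\ t.1.1 (b w) /\ t.1.1 `<=` Ow w,
   (forall y, t.1.1 y -> t.1.2 y (b w) = y),
   (forall y z, t.1.1 y -> t.2 y (t.1.2 y z) = z /\ t.1.2 y (t.2 y z) = z),
   (forall y z, t.1.1 y -> ~ Ow w z -> t.1.2 y z = z /\ t.2 y z = z) &
   (forall y z, t.1.1 y -> {for (y, z), continuous (fun x : M * M => t.1.2 x.1 x.2)} /\
                       {for (y, z), continuous (fun x : M * M => t.2 x.1 x.2)})].
  move=> w; have [N [h [hi [oN [Nb [NO' [hc [hinv [hout hcont]]]]]]]]] := M_mover hMf (opO w) (Ob w).
  by exists (N, h, hi).
have [T HT] := choice mv.
pose Nw w := (T w).1.1.
pose hw w := (T w).1.2.
pose hiw w := (T w).2.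
have oNw w : open (Nw w) by case: (HT w) => -[].
have Nwb w : Nw w (b w) by case: (HT w) => -[_ []].
have NOw w : Nw w `<=` Ow w by case: (HT w) => -[_ []].
have hc w y : Nw w y -> hw w y (b w) = y by case: (HT w) => _ H _ _ _; exact: H.
have hinv w y z : Nw w y -> hiw w y (hw w y z) = z /\ hw w y (hiw w y z) = z.
  by case: (HT w) => _ _ H _ _; exact: H.
have hout w y z : Nw w y -> ~ Ow w z -> hw w y z = z /\ hiw w y z = z.
  by case: (HT w) => _ _ _ H _; exact: H.
have hcont w y z : Nw w y ->
  {for (y, z), continuous (fun x : M * M => hw w x.1 x.2)} /\
  {for (y, z), continuous (fun x : M * M => hiw w x.1 x.2)}.
  by case: (HT w) => _ _ _ _ H; exact: H.
pose s := enum W.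
have Hsb y w : inU Nw y -> Hs hw s y (b w) = y w.
  move=> yU; rewrite (Hs_b NOw dO hout Ob hc) //; first by rewrite mem_enum.
  exact: enum_uniq.
exists (inU Nw); split.
- rewrite openE => y yU.
  apply: (@filter_forall _ _ (fun w (g : {ptws W -> M}) => Nw w (g w)) (nbhs y) (nbhs_filter y)) => w.
  have : nbhs (y w) (Nw w) by apply: open_nbhs_nbhs; split.
  exact: (@proj_continuous W (fun _ => M) w y).
- exact: Nwb.
exists {ptws V -> M}, [set f : {ptws V -> M} | Conf e M f /\ p f = b].
exists (fun x : {ptws V -> M} => (p x, (fun v => His hiw s (p x) (x v)) : {ptws V -> M})).
exists (fun yf : {ptws W -> M} * {ptws V -> M} => (fun v => Hs hw s yf.1 (yf.2 v)) : {ptws V -> M}).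
split; last by [].
split.
- apply: continuous_in_subspaceT => x; rewrite inE => -[Ex Ux].
  apply: cont_pair; first exact: cont_p.
  apply: ptws_cont => v.
  apply: (@cont_compo _ _ _ (fun x' : {ptws V -> M} => (p x', x' v))
     (fun u : {ptws W -> M} * M => His hiw s u.1 u.2)).
    apply: cont_pair; [exact: cont_p | exact: (@proj_continuous V (fun _ => M) v x)].
  exact: (cont_His hcont).
- apply: continuous_in_subspaceT => -[y f]; rewrite inE => -[[By Uy] Ff].
  apply: ptws_cont => v.
  apply: (@cont_compo _ _ _ (fun x : {ptws W -> M} * {ptws V -> M} => (x.1, x.2 v))
     (fun u : {ptws W -> M} * M => Hs hw s u.1 u.2)).
    apply: cont_pair; first exact: cont_fst.
    apply: (@cont_compo _ _ _ snd (fun g : {ptws V -> M} => g v)); first exact: cont_snd.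
    exact: (@proj_continuous V (fun _ => M) v f).
  exact: (cont_Hs hcont).
- move=> x [Ex Ux]; split; last first.
    by apply/funext => v /=; rewrite (HisK hinv).
  split; first split.
  + by move=> u v /sub euv; exact: Ex.
  + exact: Ux.
  split.
    move=> u v euv /= /(His_inj hinv Ux); exact: Ex.
  apply/funext => w /=; rewrite pE -[x (i w)]/(p x w) -(Hsb (p x) w Ux) (HsK hinv) //.
- move=> [y f] [[By Uy] [Ff pf]].
  have py : p (fun v => Hs hw s y (f v)) = y.
    apply/funext => w; rewrite pE /=.
    have -> : f (i w) = b w by rewrite -pf.
    exact: Hsb.
  split.
    split.
      by move=> u v euv /= /(Hs_inj hinv Uy); exact: Ff.
    by rewrite /= py.
  rewrite /= py; congr pair; apply/funext => v.
  by rewrite (HsK hinv).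
Qed.
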